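(* Let $X\subset\mathbb{R}^n$ be a finite set of points, $\epsilon\ge0$, $\alpha\neq0$, and let $\tau\ge1$ be an integer. Consider the gradient-normalized VCA on $(X,\epsilon)$ and on $(\alpha X,|\alpha|\epsilon)$, with degree-$t$ output parts $F_t,G_t$ and $\widehat F_t,\widehat G_t$ respectively. Suppose that for every $t\le\tau$, $|F_t|=|\widehat F_t|$, and that there is a bijection between $F^\tau\cup G^\tau$ and $\widehat F^\tau\cup\widehat G^\tau$ mapping $F_t$ onto $\widehat F_t$ and $G_t$ onto $\widehat G_t$ for each $t\le\tau$, such that each nonconstant $h$ is mapped to a polynomial $\widehat h$ that is $(1,\alpha)$-degree-wise identical to $h$. Then the same holds with $\tau$ replaced by $\tau+1$: $|F_{\tau+1}|=|\widehat F_{\tau+1}|$, and there is such a bijection between $F^{\tau+1}\cup G^{\tau+1}$ and $\widehat F^{\tau+1}\cup\widehat G^{\tau+1}$ mapping $F_t$ onto $\widehat F_t$ and $G_t$ onto $\widehat G_t$ for each $t\le\tau+1$, with each nonconstant $h$ mapped to a $(1,\alpha)$-degree-wise identical $\widehat h$.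
   Context: $\mathcal{R}_n=\mathbb{R}[x_1,\ldots,x_n]$. For $X=\{\boldsymbol x_1,\ldots,\boldsymbol x_N\}$, $\alpha X=\{\alpha\boldsymbol x_i\}$, $h(X)=(h(\boldsymbol x_1),\ldots,h(\boldsymbol x_N))^\top$; for an ordered finite set $H=\{h_1,\ldots,h_s\}$, $H(X)$ has columns $h_j(X)$; $H\boldsymbol w=\sum_jw_jh_j$, $HW=\{H\boldsymbol w_1,\ldots\}$. $\mathfrak n_{\mathrm g}(h;X)=\mathrm{vec}(\nabla h(X))$, with $\nabla h(X)$ the $N\times n$ matrix of gradients of $h$ at the points; $\mathfrak N_{\mathrm g}(H;X)=\mathfrak n_{\mathrm g}(H;X)^\top\mathfrak n_{\mathrm g}(H;X)$ where $\mathfrak n_{\mathrm g}(H;X)$ has columns $\mathfrak n_{\mathrm g}(h_j;X)$. Gradient-normalized VCA on input $(Y,\epsilon)$: $F_0=\{m\}$ ($m$ a fixed nonzero constant), $G_0=\emptyset$; for $t=1,2,\ldots$: (S1) $C_1^{\mathrm{pre}}=\{x_1,\ldots,x_n\}$, $C_t^{\mathrm{pre}}=\{pq:p\in F_1,q\in F_{t-1}\}$ for $t>1$; $C_t=C_t^{\mathrm{pre}}-F^{t-1}F^{t-1}(Y)^\dagger C_t^{\mathrm{pre}}(Y)$, $F^{t-1}=F_0\cup\cdots\cup F_{t-1}$, $\dagger$ the pseudo-inverse. (S2) Solve $C_t(Y)^\top C_t(Y)V=\mathfrak N_{\mathrm g}(C_t;Y)V\Lambda$, $V$ with columns $\boldsymbol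 v_i$, $V^\top\mathfrak N_{\mathrm g}(C_t;Y)V=I$, $\Lambda=\mathrm{diag}(\lambda_i)$. (S3) $F_t=\{C_t\boldsymbol v_i:\sqrt{\lambda_i}>\epsilon\}$, $G_t=\{C_t\boldsymbol v_i:\sqrt{\lambda_i}\le\epsilon\}$; stop with $F=\bigcup F_t$, $G=\bigcup G_t$ if $F_t=\emptyset$, otherwise continue. $F^\tau=F_0\cup\cdots\cup F_\tau$, $G^\tau=G_0\cup\cdots\cup G_\tau$. $\widehat h$ is $(t,\alpha)$-degree-wise identical to $h$ if $\widehat h=\sum_{s=0}^{\deg(h)}\alpha^{t-s}h^{(s)}$, with $h^{(s)}$ the homogeneous degree-$s$ part of $h$. *)

(* Defs.v *)
From HB Require Import structures.
From mathcomp Require Import all_boot all_order all_algebra.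
From mathcomp Require Import mpoly.
Set Implicit Arguments. Unset Strict Implicit. Unset Printing Implicit Defensive.
Import Order.TTheory GRing.Theory Num.Theory.
Local Open Scope ring_scope.

Section VCA.
Variables (R : rcfType) (n : nat).
Notation poly := {mpoly R[n]}.
Notation point := 'rV[R]_n.

Definition evalp (h : poly) (x : point) : R := h.@[fun i => x ord0 i].

Definition scale_pts (a : R) (X : seq point) : seq point := [seq a *: x | x <- X].

Definition evmx (H : seq poly) (X : seq point) : 'M[R]_(size X, size H) :=
  \matrix_(i < size X, j < size H) evalp (nth 0 H j) (nth 0 X i).

Definition gradmx (h : poly) (X : seq point) : 'M[R]_(size X, n) :=
  \matrix_(i < size X, k < n) evalp (mderiv k h) (nth 0 X i).

(* vec (column-stacking vectorization) *)
Definition vecmx m k (A : 'M[R]_(m, k)) : 'cV[R]_(k * m) := (mxvec A^T)^T.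

Definition ngmx (H : seq poly) (X : seq point) : 'M[R]_(n * size X, size H) :=
  \matrix_(r < n * size X, j < size H) vecmx (gradmx (nth 0 H j) X) r ord0.

Definition Ngmx (H : seq poly) (X : seq point) : 'M[R]_(size H) :=
  (ngmx H X)^T *m ngmx H X.

Definition is_pinv m k (A : 'M[R]_(m, k)) (B : 'M[R]_(k, m)) : Prop :=
  [/\ A *m B *m A = A, B *m A *m B = B,
      (A *m B)^T = A *m B & (B *m A)^T = B *m A].

Definition lincomb (H : seq poly) (w : 'I_(size H) -> R) : poly :=
  \sum_(j < size H) w j *: nth 0 H j.

(* Fs = [:: F_0; ...; F_{t-1}] (so t = size Fs); Ft, Gt are the outputs. *)
Definition vca_step (Y : seq point) (eps : R) (Fs : seq (seq poly))
    (Ft Gt : seq poly) : Prop :=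
  let t := size Fs in
  let Cpre : seq poly :=
    if t == 1%N then [seq 'X_i | i <- enum 'I_n]
    else [seq p * q | p <- nth [::] Fs 1, q <- nth [::] Fs t.-1] in
  let Fall := flatten Fs in
  exists P : 'M[R]_(size Fall, size Y),
    is_pinv (evmx Fall Y) P /\
    let M := P *m evmx Cpre Y in
    let C : seq poly :=
      map (fun j : 'I_(size Cpre) => nth 0 Cpre j - @lincomb Fall (fun k : 'I_(size Fall) => M k j))
        (enum 'I_(size Cpre)) in
    exists (V : 'M[R]_(size C)) (lam : 'rV[R]_(size C)),
      (evmx C Y)^T *m evmx C Y *m V = Ngmx C Y *m V *m diag_mx lam /\
      V^T *m Ngmx C Y *m V = 1%:M /\
      Ft = [seq @lincomb C (fun j => V j i) | i <- enum 'I_(size C) & eps < Num.sqrt (lam ord0 i)] /\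
      Gt = [seq @lincomb C (fun j => V j i) | i <- enum 'I_(size C) & Num.sqrt (lam ord0 i) <= eps].

Definition vca_run (m : R) (Y : seq point) (eps : R) (F G : nat -> seq poly)
    (tau : nat) : Prop :=
  F 0%N = [:: m%:MP] /\ G 0%N = [::] /\
  forall t, (1 <= t <= tau)%N -> vca_step Y eps [seq F k | k <- iota 0 t] (F t) (G t).

Definition hpart (h : poly) (s : nat) : poly := pihomog mdeg s h.

(* hh is (t,alpha)-degree-wise identical to h:
   hh = sum_{s=0}^{deg h} alpha^(t-s) h^(s)   (deg h = msize h - 1) *)
Definition dwi (t : nat) (a : R) (h hh : poly) : bool :=
  hh == \sum_(s < msize h) (a ^ (t%:Z - s%:Z)) *: hpart h s.

Definition matched (a : R) (A B : seq poly) : Prop :=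
  exists2 s : seq poly, perm_eq s B &
    all2 (fun h hh => (msize h <= 1)%N || dwi 1 a h hh) A s.

End VCA.
Arguments lincomb {R n} H w.

(* Main.v *)
Require Import Defs.
From HB Require Import structures.
From mathcomp Require Import all_boot all_order all_algebra.
From mathcomp Require Import mpoly.
From mathcomp Require Import ring lra.
Set Implicit Arguments. Unset Strict Implicit. Unset Printing Implicit Defensive.
Import Order.TTheory GRing.Theory Num.Theory.
Local Open Scope ring_scope.

Section Transform.
Variables (R : rcfType) (n : nat) (a : R).
Hypothesis Ha : a != 0.
Notation poly := {mpoly R[n]}.

Definition lqa : n.-tuple poly := [tuple a^-1 *: 'X_i | i < n].
Lemma lqaE i : tnth lqa i = a^-1 *: 'X_i.
Proof. exact: tnth_mktuple. Qed.
Definition T (k : nat) (h : poly) : poly := a ^+ k *: (h \mPo lqa).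

Lemma compX m : 'X_[m] \mPo lqa = (a^-1) ^+ (mdeg m) *: 'X_[m].
Proof.
rewrite comp_mpolyX [in RHS]mpolyXE_id mdegE -prodrXr -scaler_prod.
by apply: eq_bigr => i _; rewrite lqaE exprZn.
Qed.

Lemma compZ c p : (c *: p) \mPo lqa = c *: (p \mPo lqa).
Proof. exact: comp_mpolyZ. Qed.

Lemma TD k : {morph T k : x y / x + y}.
Proof. by move=> x y; rewrite /T raddfD scalerDr. Qed.
Lemma TB k : {morph T k : x y / x - y}.
Proof. by move=> x y; rewrite /T raddfB scalerBr. Qed.
Lemma T0 k : T k 0 = 0.
Proof. by rewrite /T raddf0 scaler0. Qed.
Lemma TZ k c p : T k (c *: p) = c *: T k p.
Proof. by rewrite /T linearZ /= !scalerA mulrC. Qed.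
Lemma Tsum k I (r : seq I) (P : pred I) (F : I -> poly) :
  T k (\sum_(i <- r | P i) F i) = \sum_(i <- r | P i) T k (F i).
Proof. exact: (big_morph _ (TD k) (T0 k)). Qed.
Lemma TC k c : T k c%:MP = (a ^+ k * c)%:MP.
Proof. by rewrite /T comp_mpolyC -mul_mpolyC -mpolyCM. Qed.
Lemma T21 p : T 2 p = a *: T 1 p.
Proof. by rewrite /T scalerA expr1 -expr2. Qed.
Lemma TM p q : T 1 p * T 1 q = T 2 (p * q).
Proof.
by rewrite /T rmorphM /= -scalerAl -scalerAr scalerA -expr2 expr1.
Qed.

Lemma T_eval k h (x : 'rV[R]_n) : evalp (T k h) (a *: x) = a ^+ k * evalp h x.
Proof.
rewrite /evalp /T mevalZ comp_mpoly_meval; congr (_ * _).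
apply: meval_eq => i; rewrite lqaE mevalZ mevalXU mxE.
by rewrite mulrA mulVf // mul1r.
Qed.

Lemma deriv_compX i c m :
  mderiv i ((c *: 'X_[m]) \mPo lqa) = a^-1 *: (mderiv i (c *: 'X_[m]) \mPo lqa).
Proof.
rewrite comp_mpolyZ mderivZ compX mderivZ mderivZ mderivX comp_mpolyZ comp_mpolyZ compX !scalerA.
have [->|mi] := eqVneq (m i) 0%N; first by rewrite !mulr0 !mul0r !scale0r.
have le : (U_(i) <= m)%MM.
  by apply/mnm_lepP => j; rewrite mnm1E; case: eqP => [<-|]; rewrite ?lt0n.
congr (_ *: _); rewrite -{1}(submK le) mdegD mdeg1 addn1 exprS; ring.
Qed.

Lemma deriv_comp i h : mderiv i (h \mPo lqa) = a^-1 *: (mderiv i h \mPo lqa).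
Proof.
rewrite [h]mpolyE; elim: (msupp h) => [|m s IH].
  by rewrite !big_nil comp_mpoly0 mderiv0 comp_mpoly0 scaler0.
by rewrite !big_cons comp_mpolyD !mderivD comp_mpolyD scalerDr IH deriv_compX.
Qed.

Lemma T_deriv i h (x : 'rV[R]_n) :
  evalp (mderiv i (T 2 h)) (a *: x) = a * evalp (mderiv i h) x.
Proof.
rewrite /T mderivZ deriv_comp scalerA.
have -> : a ^+ 2 * a^-1 = a ^+ 1 by rewrite expr2 mulfK.
exact: (T_eval 1).
Qed.

Lemma T1_formula h :
  T 1 h = \sum_(s < msize h) (a ^ (1%:Z - s%:Z)) *: hpart h s.
Proof.
rewrite /hpart.
under eq_bigr => s _ do rewrite (pihomogE mdeg) scaler_sumr.

rewrite (exchange_big_dep xpredT) //=.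

rewrite /T comp_mpolyEX scaler_sumr.
apply: eq_big_seq => m mh.
rewrite compX.
rewrite (bigD1 (Ordinal (msize_mdeg_lt mh))) //= big1 ?addr0; last first.
  move=> j /andP [/eqP e]; rewrite -val_eqE /= -e eqxx //.
rewrite !scalerA; congr (_ *: _).
by rewrite expfzDr // expr1z -exprnN -exprVn expr1; ring.
Qed.
End Transform.
Section Mat.
Variable (R : rcfType).

Lemma gram_col0 N K (A : 'M[R]_(N, K)) k :
  (A^T *m A) k k = 0 -> forall i, A i k = 0.
Proof.
rewrite mxE => H i.
have h0 : forall j, xpredT j -> 0 <= A^T k j * A j k.
  by move=> j _; rewrite mxE -expr2 sqr_ge0.
have := psumr_eq0P h0 H (i:=i) isT.
by rewrite mxE => /eqP; rewrite mulf_eq0 orbb => /eqP.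
Qed.

Lemma pinv_entry N K (A : 'M[R]_(N, K)) P :
  is_pinv A P -> (forall k l : 'I_K, k != l -> (A^T *m A) k l = 0) ->
  forall k i, P k i = A i k / (A^T *m A) k k.
Proof.
case=> H1 H2 H3 H4 Hd k i.
have h1 : A^T *m A *m P = A^T.
  by rewrite -mulmxA -H3 -trmx_mul H1.
have [Hk|Hk] := eqVneq ((A^T *m A) k k) 0.
  have Ak := gram_col0 Hk.
  rewrite Hk invr0 mulr0.
  have PA : forall l, (P *m A) k l = 0.
    move=> l; rewrite -H4 mxE mxE big1 // => j _; by rewrite Ak mulr0.
  by rewrite -H2 mxE big1 // => l _; rewrite PA mul0r.
set G := (A^T *m A) k k in Hk *.
have := congr1 (fun M : 'M[R]_(K, N) => M k i) h1; rewrite /= mxE (bigD1 k) //= big1 ?addr0.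
  rewrite [A^T k i]mxE -/G => E.
  by apply: (mulfI Hk); rewrite E mulrCA divff // mulr1.
by move=> l /negbTE lk; rewrite Hd ?mul0r // eq_sym lk.
Qed.

Definition pinvd N K (A : 'M[R]_(N, K)) : 'M[R]_(K, N) :=
  \matrix_(k, i) (A i k / (A^T *m A) k k).

Lemma pinvd_ok N K (A : 'M[R]_(N, K)) :
  (forall k l : 'I_K, k != l -> (A^T *m A) k l = 0) -> is_pinv A (pinvd A).
Proof.
move=> Hd.
have Qe : forall k i, pinvd A k i = A i k / (A^T *m A) k k.
  by move=> k i; rewrite [LHS]mxE.
have QA : forall k l, (pinvd A *m A) k l =
    (k == l)%:R * ((A^T *m A) k k / (A^T *m A) k k).
  move=> k l; rewrite mxE.
  under eq_bigr => j _ do rewrite Qe mulrAC.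
  rewrite -mulr_suml.
  have -> : \sum_j A j k * A j l = (A^T *m A) k l.
    by rewrite mxE; apply: eq_bigr => j _; rewrite mxE.
  have [<-|kl] := eqVneq k l; first by rewrite mul1r.
  by rewrite Hd // !mul0r.
split.
- apply/matrixP => i l; rewrite -mulmxA mxE (bigD1 l) //= big1 ?addr0.
    rewrite QA eqxx mul1r.
    have [Hl|Hl] := eqVneq ((A^T *m A) l l) 0; first by rewrite (gram_col0 Hl) mul0r.
    by rewrite divff // mulr1.
  by move=> k kl; rewrite QA (negbTE kl) mul0r mulr0.
- apply/matrixP => k i; rewrite mxE (bigD1 k) //= big1 ?addr0.
    rewrite QA eqxx mul1r !Qe.
    have [Hl|Hl] := eqVneq ((A^T *m A) k k) 0; first by rewrite Hl invr0 !mulr0.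
    by rewrite divff // mul1r.
  by move=> l lk; rewrite QA eq_sym (negbTE lk) mul0r mul0r.
- apply/matrixP => i j; rewrite !mxE; apply: eq_bigr => k _; rewrite !Qe.
  by rewrite mulrCA mulrA.
- apply/matrixP => k l; rewrite [LHS]mxE !QA eq_sym.
  by have [->|] := eqVneq l k; rewrite ?mul0r.
Qed.
End Mat.

Section Dot.
Variables (R : rcfType) (n : nat).
Notation poly := {mpoly R[n]}.
Notation point := 'rV[R]_n.
Implicit Types (p q f g h : poly) (y : point) (Y : seq point) (L H K : seq poly).

Definition dotL (Y : seq point) (f g : poly) : R := \sum_(y <- Y) evalp f y * evalp g y.
Definition proj (Y : seq point) (L : seq poly) (c : poly) : poly :=
  \sum_(f <- L) (dotL Y f c / dotL Y f f) *: f.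
Definition orthr (Y : seq point) : rel poly := fun f g => dotL Y f g == 0.

Lemma evalpD p q y : evalp (p + q) y = evalp p y + evalp q y.
Proof. exact: mevalD. Qed.
Lemma evalp0 y : evalp 0 y = 0.
Proof. exact: meval0. Qed.
Lemma evalpB p q y : evalp (p - q) y = evalp p y - evalp q y.
Proof. exact: mevalB. Qed.
Lemma evalpZ c p y : evalp (c *: p) y = c * evalp p y.
Proof. exact: mevalZ. Qed.
Lemma evalpC c y : evalp c%:MP y = c.
Proof. exact: mevalC. Qed.
Lemma evalp_sum I (r : seq I) (P : pred I) (F : I -> poly) y :
  evalp (\sum_(i <- r | P i) F i) y = \sum_(i <- r | P i) evalp (F i) y.
Proof. exact: (big_morph _ (fun p q => evalpD p q y) (evalp0 y)). Qed.

Lemma dotLC Y f g : dotL Y f g = dotL Y g f.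
Proof. by apply: eq_bigr => y _; rewrite mulrC. Qed.
Lemma dotLB Y f g h : dotL Y f (g - h) = dotL Y f g - dotL Y f h.
Proof. by rewrite /dotL -sumrB; apply: eq_bigr => y _; rewrite evalpB mulrBr. Qed.
Lemma dotLZ Y f c g : dotL Y f (c *: g) = c * dotL Y f g.
Proof. by rewrite /dotL mulr_sumr; apply: eq_bigr => y _; rewrite evalpZ mulrCA. Qed.
Lemma dotL_sum Y f I (r : seq I) (F : I -> poly) :
  dotL Y f (\sum_(i <- r) F i) = \sum_(i <- r) dotL Y f (F i).
Proof.
rewrite /dotL exchange_big /=; apply: eq_bigr => y _.
by rewrite evalp_sum mulr_sumr.
Qed.
Lemma dotL_ge0 Y f : 0 <= dotL Y f f.
Proof. by apply: sumr_ge0 => y _; rewrite -expr2 sqr_ge0. Qed.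
Lemma dotL_eq0 Y f g : dotL Y f f = 0 -> dotL Y f g = 0.
Proof.
elim: Y => [|y Y IH]; first by rewrite /dotL !big_nil.
rewrite /dotL !big_cons => /eqP; rewrite paddr_eq0 ?dotL_ge0 -?expr2 ?sqr_ge0 //.
rewrite sqrf_eq0 => /andP [/eqP -> /eqP /IH]; rewrite /dotL => ->.
by rewrite mul0r addr0.
Qed.
Lemma dotLCC Y c1 c2 : dotL Y c1%:MP c2%:MP = (c1 * c2) *+ size Y.
Proof.
elim: Y => [|y Y IH]; first by rewrite /dotL big_nil.
by rewrite /dotL big_cons -/(dotL _ _ _) IH !evalpC mulrS.
Qed.

Lemma evmx_dot H K Y (k : 'I_(size H)) (j : 'I_(size K)) :
  ((evmx H Y)^T *m evmx K Y) k j = dotL Y (nth 0 H k) (nth 0 K j).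
Proof.
rewrite mxE /dotL (big_nth 0) big_mkord; apply: eq_bigr => i _.
by rewrite !mxE.
Qed.

Lemma lincomb_eval H w y :
  evalp (lincomb H w) y = \sum_j w j * evalp (nth 0 H j) y.
Proof. by rewrite /lincomb evalp_sum; apply: eq_bigr => j _; rewrite evalpZ. Qed.

Lemma dot_lincomb H Y (V : 'M[R]_(size H)) i i' :
  dotL Y (lincomb H (fun j => V j i)) (lincomb H (fun j => V j i')) =
  (V^T *m ((evmx H Y)^T *m evmx H Y) *m V) i i'.
Proof.
have -> : V^T *m ((evmx H Y)^T *m evmx H Y) *m V =
   (evmx H Y *m V)^T *m (evmx H Y *m V) by rewrite trmx_mul !mulmxA.
rewrite mxE /dotL (big_nth 0) big_mkord; apply: eq_bigr => r _.
rewrite !mxE !lincomb_eval; congr (_ * _); apply: eq_bigr => j _;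
  by rewrite !mxE mulrC.
Qed.

Lemma dot_lincomb_r Y g H w :
  dotL Y g (lincomb H w) = \sum_j w j * dotL Y g (nth 0 H j).
Proof. by rewrite /lincomb dotL_sum; apply: eq_bigr => j _; rewrite dotLZ. Qed.

Lemma orth_nth Y L k l : pairwise (orthr Y) L -> (k < size L)%N -> (l < size L)%N ->
  k != l -> dotL Y (nth 0 L k) (nth 0 L l) = 0.
Proof.
move=> /(pairwiseP 0) H hk hl; rewrite neq_ltn => /orP [kl|lk].
  by apply/eqP; apply: H.
by rewrite dotLC; apply/eqP; apply: H.
Qed.

Lemma gram_diag Y L : pairwise (orthr Y) L ->
  forall k l : 'I_(size L), k != l -> ((evmx L Y)^T *m evmx L Y) k l = 0.
Proof. by move=> H k l kl; rewrite evmx_dot orth_nth. Qed.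

Lemma proj_sum Y L c :
  proj Y L c = \sum_(k < size L) (dotL Y (nth 0 L k) c / dotL Y (nth 0 L k) (nth 0 L k)) *: nth 0 L k.
Proof. by rewrite /proj (big_nth 0) big_mkord. Qed.

Lemma proj_orth Y L c k : pairwise (orthr Y) L -> (k < size L)%N ->
  dotL Y (nth 0 L k) (c - proj Y L c) = 0.
Proof.
move=> H hk; rewrite dotLB proj_sum dotL_sum.
rewrite (bigD1 (Ordinal hk)) //= big1 ?addr0; last first.
  move=> l lk; rewrite dotLZ (orth_nth (k:=k) (l:=l) H hk (ltn_ord l)) ?mulr0 //.
  by move: lk; rewrite eq_sym -(inj_eq val_inj).
rewrite dotLZ.
have [E|E] := eqVneq (dotL Y (nth 0 L k) (nth 0 L k)) 0.
  by rewrite (dotL_eq0 c E) E !mul0r subrr.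
by rewrite divfK // subrr.
Qed.

Definition stepV (Y : seq point) (eps : R) (C Ft Gt : seq poly) : Prop :=
  exists (V : 'M[R]_(size C)) (lam : 'rV[R]_(size C)),
      (evmx C Y)^T *m evmx C Y *m V = Ngmx C Y *m V *m diag_mx lam /\
      V^T *m Ngmx C Y *m V = 1%:M /\
      Ft = [seq lincomb C (fun j => V j i) | i <- enum 'I_(size C) & eps < Num.sqrt (lam ord0 i)] /\
      Gt = [seq lincomb C (fun j => V j i) | i <- enum 'I_(size C) & Num.sqrt (lam ord0 i) <= eps].

Definition Cpre_of (Fs : seq (seq poly)) : seq poly :=
  if size Fs == 1%N then [seq 'X_i | i <- enum 'I_n]
  else [seq p * q | p <- nth [::] Fs 1, q <- nth [::] Fs (size Fs).-1].

Definition Cof (Y : seq point) (Fs : seq (seq poly)) (P : 'M[R]_(size (flatten Fs), size Y)) :=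
  map (fun j : 'I_(size (Cpre_of Fs)) => nth 0 (Cpre_of Fs) j -
         lincomb (flatten Fs) (fun k : 'I_(size (flatten Fs)) => (P *m evmx (Cpre_of Fs) Y) k j))
      (enum 'I_(size (Cpre_of Fs))).
Arguments Cof : clear implicits.

Lemma vca_stepE Y eps Fs Ft Gt :
  vca_step Y eps Fs Ft Gt <->
  exists P, is_pinv (evmx (flatten Fs) Y) P /\ stepV Y eps (Cof Y Fs P) Ft Gt.
Proof. by []. Qed.

Lemma Cof_proj Y Fs P : is_pinv (evmx (flatten Fs) Y) P ->
  pairwise (orthr Y) (flatten Fs) ->
  Cof Y Fs P = map (fun c => c - proj Y (flatten Fs) c) (Cpre_of Fs).
Proof.
move=> hP hL; rewrite /Cof.
rewrite -[in RHS](mkseq_nth 0 (Cpre_of Fs)) /mkseq -val_enum_ord -map_comp -[in RHS]map_comp.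
apply: eq_map => j /=; congr (_ - _).
rewrite proj_sum /lincomb; apply: eq_bigr => k _; congr (_ *: _).
rewrite mxE.
under eq_bigr => i _ do rewrite (pinv_entry hP (gram_diag hL)) mulrAC.
rewrite -mulr_suml evmx_dot; congr (_ / _).
rewrite /dotL (big_nth 0) big_mkord; apply: eq_bigr => i _; by rewrite !mxE.
Qed.
End Dot.

Section Run.
Variables (R : rcfType) (n : nat).
Notation poly := {mpoly R[n]}.
Notation point := 'rV[R]_n.
Implicit Types (Y : seq point) (L C : seq poly).

Lemma stepV_gram Y C (V : 'M[R]_(size C)) lam :
  (evmx C Y)^T *m evmx C Y *m V = Ngmx C Y *m V *m diag_mx lam ->
  V^T *m Ngmx C Y *m V = 1%:M ->
  V^T *m ((evmx C Y)^T *m evmx C Y) *m V = diag_mx lam.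
Proof.
move=> e1 e2; rewrite -mulmxA e1 (mulmxA V^T (Ngmx C Y *m V)).
by rewrite (mulmxA V^T (Ngmx C Y)) e2 mul1mx.
Qed.

Lemma stepV_props Y eps C Ft Gt : 0 <= eps -> stepV Y eps C Ft Gt ->
  [/\ (forall f, f \in Ft -> 0 < dotL Y f f), pairwise (orthr Y) Ft &
      (forall g, (forall c, c \in C -> dotL Y g c = 0) -> forall f, f \in Ft -> dotL Y g f = 0)].
Proof.
move=> he [V [lam [e1 [e2 [-> _]]]]].
have D := stepV_gram e1 e2.
split.
- move=> f /mapP [i]; rewrite mem_filter => /andP [hi _] ->.
  rewrite dot_lincomb D mxE eqxx mulr1n.
  by rewrite -sqrtr_gt0; apply: le_lt_trans hi.
- rewrite pairwise_map; apply: pairwise_filter.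
  apply: (sub_pairwise (r := [rel x y | x != y])); last by rewrite -uniq_pairwise enum_uniq.
  by move=> i j /= ij; rewrite /orthr dot_lincomb D mxE (negbTE ij) mulr0n.
- move=> g hg f /mapP [i _ ->]; rewrite dot_lincomb_r big1 // => j _.
  by rewrite hg ?mulr0 // mem_nth.
Qed.

Lemma mem_proj_orth Y L Cp g c : pairwise (orthr Y) L -> g \in L ->
  c \in map (fun c => c - proj Y L c) Cp -> dotL Y g c = 0.
Proof.
move=> hL /(nthP 0) [k hk <-] /mapP [c' _ ->].
exact: proj_orth.
Qed.

Lemma iotaS0 t : iota 0 t.+1 = iota 0 t ++ [:: t].
Proof. by rewrite -addn1 iotaD. Qed.

Lemma run_props m Y eps F G tau : 0 <= eps -> m != 0 -> vca_run m Y eps F G tau ->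
  forall t, (t <= tau)%N ->
  pairwise (orthr Y) (flatten [seq F k | k <- iota 0 t.+1]) /\
  (forall s, (1 <= s <= t)%N -> forall f, f \in F s -> 0 < dotL Y f f /\ (1 < msize f)%N).
Proof.
move=> he hm [F0 [_ Hst]]; elim => [|t IH] ht.
  split; last by move=> s /andP [h1 h2]; move: (leq_trans h1 h2).
  by rewrite /= F0.
have [IHp IHf] := IH (ltnW ht).
have := Hst t.+1; rewrite ht => /(_ isT) /vca_stepE [P [hP hV]].
rewrite (Cof_proj hP IHp) in hV.
have [hpos hpw horth] := stepV_props he hV.
have hor : forall g f, g \in flatten [seq F k | k <- iota 0 t.+1] -> f \in F t.+1 ->
    dotL Y g f = 0.
  by move=> g f hg; apply: horth => c; apply: mem_proj_orth.
split.
  rewrite iotaS0 map_cat flatten_cat /= cats0 pairwise_cat IHp hpw andbT.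
  by rewrite andbT; apply/allrelP => g f hg hf; apply/eqP; apply: hor.
move=> s /andP [h1]; rewrite leq_eqVlt => /orP [/eqP ->|hs]; last first.
  by apply: IHf; rewrite h1.
move=> f hf; split; first exact: hpos.
rewrite ltnNge; apply/negP => /msize1_polyC fc.
have hmf : dotL Y m%:MP f = 0.
  apply: hor => //; rewrite /= F0 /=; exact: mem_head.
have := hpos f hf; move: hmf; rewrite fc !dotLCC => /eqP.
rewrite mulrn_eq0 mulf_eq0 (negbTE hm) /= => /orP [/eqP -> | /eqP ->].
  by rewrite mulr0n ltxx.
by rewrite mulr0 mul0rn ltxx.
Qed.
End Run.

Section Grad.
Variables (R : rcfType) (n : nat).
Notation poly := {mpoly R[n]}.
Notation point := 'rV[R]_n.

Definition dotG (Y : seq point) (f g : poly) : R :=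
  \sum_(y <- Y) \sum_(i < n) evalp (mderiv i f) y * evalp (mderiv i g) y.

Lemma Ngmx_dot (H : seq poly) (Y : seq point) (k j : 'I_(size H)) :
  Ngmx H Y k j = dotG Y (nth 0 H k) (nth 0 H j).
Proof.
rewrite /Ngmx mxE (reindex _ (curry_mxvec_bij _ _)) /=.
rewrite /dotG (big_nth 0) big_mkord exchange_big pair_big /=.
apply: eq_bigr => [[i r]] _ /=.
by rewrite !mxE /vecmx !mxvecE !mxE.
Qed.
End Grad.

Section Main.
Variables (R : rcfType) (n : nat) (a : R).
Hypothesis Ha : a != 0.
Notation poly := {mpoly R[n]}.
Notation point := 'rV[R]_n.
Notation T := (T a).
Implicit Types (X : seq point) (L C : seq poly) (h hh f g c : poly).

Lemma dwiT h : dwi 1 a h (T 1 h).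
Proof. by rewrite /dwi T1_formula. Qed.

Lemma dwiE h hh : dwi 1 a h hh = (hh == T 1 h).
Proof. by rewrite /dwi T1_formula. Qed.

Lemma all2_T s1 s2 : all2 (fun h hh => (msize h <= 1)%N || dwi 1 a h hh) s1 s2 ->
  (forall f, f \in s1 -> (1 < msize f)%N) -> s2 = map (T 1) s1.
Proof.
elim: s1 s2 => [|x s1 IH] [|y s2] //= /andP [hxy hs] hm.
rewrite (IH s2 hs) => [|f hf]; last by apply: hm; rewrite inE hf orbT.
move: hxy; rewrite leqNgt hm ?mem_head //= dwiE => /eqP ->.
by [].
Qed.

Lemma all2_mapT s : all2 (fun h hh => (msize h <= 1)%N || dwi 1 a h hh) s (map (T 1) s).
Proof. by elim: s => //= x s ->; rewrite dwiT orbT. Qed.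

Lemma perm_flatten_pw (I : eqType) (s : seq I) (f g : I -> seq poly) :
  (forall k, k \in s -> perm_eq (f k) (g k)) ->
  perm_eq (flatten (map f s)) (flatten (map g s)).
Proof.
elim: s => [|x s IH] H //=.
rewrite perm_cat ?H ?mem_head // IH // => k hk.
by apply: H; rewrite inE hk orbT.
Qed.

Definition Tp (h : poly) : poly := if (msize h <= 1)%N then h else T 1 h.

Lemma dotL_scale X f g :
  dotL (scale_pts a X) f g = \sum_(x <- X) evalp f (a *: x) * evalp g (a *: x).
Proof. by rewrite /dotL big_map. Qed.

Lemma term_T X f c :
  (dotL (scale_pts a X) (Tp f) (T 2 c) / dotL (scale_pts a X) (Tp f) (Tp f)) *: Tp f =
  T 2 ((dotL X f c / dotL X f f) *: f).
Proof.
rewrite /Tp TZ; case: ifP => hf.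
  move: (msize1_polyC hf) => ->.
  have ec : forall y, evalp (f@_0)%:MP y = f@_0 by move=> y; exact: evalpC.
  rewrite !dotL_scale TC -!mul_mpolyC -!mpolyCM; congr (_%:MP).
  have -> : \sum_(x <- X) evalp (f@_0)%:MP (a *: x) * evalp (T 2 c) (a *: x) =
      a ^+ 2 * dotL X (f@_0)%:MP c.
    rewrite /dotL mulr_sumr; apply: eq_bigr => x _.
    by rewrite T_eval // !ec mulrCA.
  have -> : \sum_(x <- X) evalp (f@_0)%:MP (a *: x) * evalp (f@_0)%:MP (a *: x) =
      dotL X (f@_0)%:MP (f@_0)%:MP.
    by apply: eq_bigr => x _; rewrite !ec.
  ring.
rewrite !dotL_scale [in RHS]T21 [in RHS]scalerA.
have -> : \sum_(x <- X) evalp (T 1 f) (a *: x) * evalp (T 2 c) (a *: x) =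
    a ^+ 3 * dotL X f c.
  rewrite /dotL mulr_sumr; apply: eq_bigr => x _.
  by rewrite !T_eval //; ring.
have -> : \sum_(x <- X) evalp (T 1 f) (a *: x) * evalp (T 1 f) (a *: x) =
    a ^+ 2 * dotL X f f.
  rewrite /dotL mulr_sumr; apply: eq_bigr => x _.
  by rewrite !T_eval //; ring.
congr (_ *: _).
have e : a ^+ 3 / a ^+ 2 = a by rewrite exprS mulfK // expf_neq0.
rewrite invfM -[in RHS]e; ring.
Qed.

Lemma proj_T X L Lh c : perm_eq Lh (map Tp L) ->
  proj (scale_pts a X) Lh (T 2 c) = T 2 (proj X L c).
Proof.
move=> hp; rewrite /proj (perm_big _ hp) big_map Tsum.
by apply: eq_bigr => f _; rewrite term_T.
Qed.

Lemma Cpre_ofE (F : nat -> seq poly) tau : (1 <= tau)%N ->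
  Cpre_of [seq F k | k <- iota 0 tau.+1] = [seq p * q | p <- F 1%N, q <- F tau].
Proof.
move=> ht; rewrite /Cpre_of size_map size_iota eqSS.
have -> : (tau == 0%N) = false by case: tau ht.
by rewrite (nth_map 0%N) ?size_iota // (nth_map 0%N) ?size_iota // !nth_iota.
Qed.

Lemma dotG_T2 X f g :
  dotG (scale_pts a X) (T 2 f) (T 2 g) = a ^+ 2 * dotG X f g.
Proof.
rewrite /dotG big_map mulr_sumr; apply: eq_bigr => x _.
rewrite mulr_sumr; apply: eq_bigr => i _.
by rewrite !T_deriv //; ring.
Qed.

Lemma dotL_T2 X f g :
  dotL (scale_pts a X) (T 2 f) (T 2 g) = a ^+ 4 * dotL X f g.
Proof.
rewrite dotL_scale /dotL mulr_sumr; apply: eq_bigr => x _.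
by rewrite !T_eval //; ring.
Qed.
End Main.

Unset Implicit Arguments.

Theorem lemma8 (R : rcfType) (n : nat) (X : seq 'rV[R]_n) (eps alpha m : R)
    (tau : nat) (F G Fh Gh : nat -> seq {mpoly R[n]}) :
  0 <= eps -> alpha != 0 -> m != 0 -> (1 <= tau)%N ->
  vca_run m X eps F G tau.+1 ->
  vca_run m (scale_pts alpha X) (`|alpha| * eps) Fh Gh tau ->
  (forall t, (t <= tau)%N ->
     size (F t) = size (Fh t) /\
     matched alpha (F t) (Fh t) /\ matched alpha (G t) (Gh t)) ->
  exists Fn Gn : seq {mpoly R[n]},
    vca_step (scale_pts alpha X) (`|alpha| * eps)
      [seq Fh k | k <- iota 0 tau.+1] Fn Gn /\
    size (F tau.+1) = size Fn /\
    matched alpha (F tau.+1) Fn /\ matched alpha (G tau.+1) Gn.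
Proof.
move=> he ha hm htau hrun hrunh hmatch.
set Fs := [seq F k | k <- iota 0 tau.+1].
set Fsh := [seq Fh k | k <- iota 0 tau.+1].
set Xh := scale_pts alpha X.
have heh : 0 <= `|alpha| * eps by rewrite mulr_ge0.
have [hpL hF] := run_props he hm hrun (leqnSn tau).
have [hpLh _] := run_props heh hm hrunh (leqnn tau).
have hperm1 : forall t, (1 <= t <= tau)%N -> perm_eq (Fh t) (map (T alpha 1) (F t)).
  move=> t ht; have ht' : (t <= tau)%N by case/andP: ht.
  have [hsz [hM hMG]] := hmatch t ht'.
  case: hM => s hs hall.
  rewrite -(all2_T ha hall) 1?perm_sym // => f hf.
  exact: (hF t ht f hf).2.
have hLh : perm_eq (flatten Fsh) (map (Tp alpha) (flatten Fs)).
  rewrite /Fsh /Fs map_flatten -map_comp; apply: perm_flatten_pw => k.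
  rewrite mem_iota add0n ltnS => /andP [_ hk] /=.
  case: k hk => [|k] hk.
    rewrite hrunh.1 hrun.1 /= /Tp mmeasureC.
    by case: (m != 0).
  have ht : (1 <= k.+1 <= tau)%N by [].
  have -> : map (Tp alpha) (F k.+1) = map (T alpha 1) (F k.+1).
    by apply/eq_in_map => f hf; rewrite /Tp leqNgt (hF _ ht f hf).2.
  exact: hperm1.
have hCpre : perm_eq (Cpre_of Fsh) (map (T alpha 2) (Cpre_of Fs)).
  rewrite /Fsh /Fs !Cpre_ofE //.
  have h1 : (1 <= 1 <= tau)%N by rewrite htau.
  have h2 : (1 <= tau <= tau)%N by rewrite htau leqnn.
  apply: perm_trans (perm_allpairs _ (hperm1 _ h1) (hperm1 _ h2)) _.
  rewrite allpairs_mapl allpairs_mapr map_allpairs.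
  have -> : [seq T alpha 1 x * T alpha 1 y | x <- F 1%N, y <- F tau] =
      [seq T alpha 2 (x * y) | x <- F 1%N, y <- F tau].
    by apply: eq_allpairs => x y; exact: TM.
  by [].
have := hrun.2.2 tau.+1; rewrite leqnn /= => /(_ isT) /vca_stepE [P [hP hV]].
rewrite (Cof_proj hP hpL) in hV.
set C := map (fun c => c - proj X (flatten Fs) c) (Cpre_of Fs) in hV.
set Ch := map (fun c => c - proj Xh (flatten Fsh) c) (Cpre_of Fsh).
have hCh : perm_eq Ch (map (T alpha 2) C).
  apply: perm_trans (perm_map _ hCpre) _.
  rewrite /C -!map_comp.
  have E : forall c, ((fun c => c - proj Xh (flatten Fsh) c) \o T alpha 2) c =
     (T alpha 2 \o (fun c => c - proj X (flatten Fs) c)) c.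
    by move=> c /=; rewrite TB; congr (_ - _); exact: proj_T.
  by rewrite (eq_map E).
case: hV => V [lam [e1 [e2 [eF eG]]]].
have := hCh; case/(perm_iotaP 0) => Is hIs eCh.
have szCh : size Ch = size C by rewrite (perm_size hCh) size_map.
have szIs : size Is = size Ch by rewrite eCh size_map.
have uIs : uniq Is by rewrite (perm_uniq hIs) iota_uniq.
have memIs : forall j, (j \in Is) = (j < size C)%N.
  by move=> j; rewrite (perm_mem hIs) mem_iota size_map.
have hlt : forall k : 'I_(size Ch), (nth 0%N Is k < size C)%N.
  by move=> k; rewrite -memIs mem_nth // szIs.
have hlt2 : forall j : 'I_(size C), (index (val j) Is < size Ch)%N.
  by move=> j; rewrite -szIs index_mem memIs; exact: ltn_ord.
pose tf := fun k : 'I_(size Ch) => Ordinal (hlt k).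
pose sf := fun j : 'I_(size C) => Ordinal (hlt2 j).
have tfK : cancel sf tf by move=> j; apply: val_inj; rewrite /= nth_index // memIs.
have sfK : cancel tf sf by move=> k; apply: val_inj; rewrite /= index_uniq // szIs.
have nCh : forall k : 'I_(size Ch), nth 0 Ch k = T alpha 2 (nth 0 C (tf k)).
  have nCh0 : forall i, (i < size Is)%N ->
      nth 0 Ch i = T alpha 2 (nth 0 C (nth 0%N Is i)).
    by move=> i hi; rewrite eCh (nth_map 0%N) // (nth_map 0) // -memIs mem_nth.
  by move=> k; rewrite nCh0 // szIs.
have [Pi PiE] : {Pi : 'M[R]_(size C, size Ch) | forall j k, Pi j k = (tf k == j)%:R}.
  by exists (\matrix_(j, k) ((tf k == j)%:R)) => j k; rewrite mxE.
have conjE : forall (M : 'M[R]_(size C)) k k', (Pi^T *m M *m Pi) k k' = M (tf k) (tf k').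
  move=> M k k'; rewrite mxE (bigD1 (tf k')) //= big1 ?addr0; last first.
    by move=> j hj; rewrite PiE eq_sym (negbTE hj) mulr0.
  rewrite PiE eqxx mulr1 mxE (bigD1 (tf k)) //= big1 ?addr0; last first.
    by move=> j hj; rewrite mxE PiE eq_sym (negbTE hj) mul0r.
  by rewrite mxE PiE eqxx mul1r.
have PiPiT : Pi *m Pi^T = 1%:M.
  apply/matrixP => j j'; rewrite mxE (bigD1 (sf j)) //= big1 ?addr0.
    by rewrite mxE !PiE tfK eqxx mul1r mxE.
  move=> k hk; rewrite PiE; case: eqP => [e|]; last by rewrite mul0r.
  by move: hk; rewrite -e sfK eqxx.
have PiTPi : Pi^T *m Pi = 1%:M.
  apply/matrixP => k k'; have := conjE 1%:M k k'; rewrite mulmx1 => ->.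
  by rewrite !mxE (can_eq sfK).
pose cj := fun M : 'M[R]_(size C) => Pi^T *m M *m Pi.
have cjM : forall M M', cj M *m cj M' = cj (M *m M').
  move=> M M'; rewrite /cj !mulmxA -(mulmxA (Pi^T *m M) Pi Pi^T) PiPiT mulmx1.
  by [].
have cjT : forall M, (cj M)^T = cj M^T.
  by move=> M; rewrite /cj !trmx_mul trmxK mulmxA.
have cj1 : cj 1%:M = 1%:M by rewrite /cj mulmx1 PiTPi.
have trZ : forall c (M : 'M[R]_(size Ch)), (c *: M)^T = c *: M^T.
  by move=> c M; apply/matrixP => i j; rewrite !mxE.
have hG : (evmx Ch Xh)^T *m evmx Ch Xh = alpha ^+ 4 *: cj ((evmx C X)^T *m evmx C X).
  apply/matrixP => k k'; rewrite evmx_dot [RHS]mxE /cj conjE evmx_dot !nCh.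
  exact: dotL_T2.
have hN : Ngmx Ch Xh = alpha ^+ 2 *: cj (Ngmx C X).
  apply/matrixP => k k'; rewrite [RHS]mxE /cj conjE !Ngmx_dot !nCh.
  exact: dotG_T2.
pose Vh := alpha^-1 *: cj V.
have [lamh lamhE] : {lamh : 'rV[R]_(size Ch) | forall k, lamh ord0 k = alpha ^+ 2 * lam ord0 (tf k)}.
  exists (\row_k (alpha ^+ 2 * lam ord0 (tf k))) => k; by rewrite mxE.
have hD : diag_mx lamh = alpha ^+ 2 *: cj (diag_mx lam).
  apply/matrixP => k k'; rewrite [RHS]mxE /cj conjE !mxE lamhE (inj_eq (can_inj sfK)).
  by rewrite mulrnAr.
have hlin : forall i : 'I_(size Ch),
    lincomb Ch (fun j => Vh j i) = T alpha 1 (lincomb C (fun j => V j (tf i))).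
  move=> i; rewrite /lincomb Tsum (reindex tf) /=; last first.
    by exists sf => ? _; [exact: sfK | exact: tfK].
  apply: eq_bigr => k _; rewrite nCh /Vh mxE /cj conjE TZ T21 scalerA.
  by congr (_ *: _); rewrite mulrAC mulVf // mul1r.
have hsq : forall i : 'I_(size Ch),
    Num.sqrt (lamh ord0 i) = `|alpha| * Num.sqrt (lam ord0 (tf i)).
  by move=> i; rewrite lamhE sqrtrM ?sqr_ge0 // sqrtr_sqr.
have ha0 : 0 < `|alpha| by rewrite normr_gt0.
have hperm_enum : perm_eq (map tf (enum 'I_(size Ch))) (enum 'I_(size C)).
  apply: uniq_perm; first by rewrite (map_inj_uniq (can_inj sfK)) enum_uniq.
    exact: enum_uniq.
  move=> j; rewrite mem_enum; apply/mapP; exists (sf j); by rewrite ?mem_enum ?tfK.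
pose Fn := [seq lincomb Ch (fun j => Vh j i) | i <- enum 'I_(size Ch) &
             `|alpha| * eps < Num.sqrt (lamh ord0 i)].
pose Gn := [seq lincomb Ch (fun j => Vh j i) | i <- enum 'I_(size Ch) &
             Num.sqrt (lamh ord0 i) <= `|alpha| * eps].
have hFn : perm_eq (map (T alpha 1) (F tau.+1)) Fn.
  rewrite eF /Fn.
  have -> : [seq lincomb Ch (fun j => Vh j i) | i <- enum 'I_(size Ch) &
             `|alpha| * eps < Num.sqrt (lamh ord0 i)] =
      [seq T alpha 1 (lincomb C (fun j => V j i)) | i <- map tf (enum 'I_(size Ch)) &
             eps < Num.sqrt (lam ord0 i)].
    rewrite [in RHS]filter_map -[in RHS]map_comp.
    have ef : (fun i => `|alpha| * eps < Num.sqrt (lamh ord0 i)) =1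
        preim tf (fun i => eps < Num.sqrt (lam ord0 i)).
      by move=> i /=; rewrite hsq ltr_pM2l.
    rewrite (eq_filter ef); apply: eq_map => i /=; exact: hlin.
  rewrite -map_comp; apply: perm_map; apply: perm_filter.
  by rewrite perm_sym.
have hGn : perm_eq (map (T alpha 1) (G tau.+1)) Gn.
  rewrite eG /Gn.
  have -> : [seq lincomb Ch (fun j => Vh j i) | i <- enum 'I_(size Ch) &
             Num.sqrt (lamh ord0 i) <= `|alpha| * eps] =
      [seq T alpha 1 (lincomb C (fun j => V j i)) | i <- map tf (enum 'I_(size Ch)) &
             Num.sqrt (lam ord0 i) <= eps].
    rewrite [in RHS]filter_map -[in RHS]map_comp.
    have ef : (fun i => Num.sqrt (lamh ord0 i) <= `|alpha| * eps) =1
        preim tf (fun i => Num.sqrt (lam ord0 i) <= eps).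
      by move=> i /=; rewrite hsq ler_pM2l.
    rewrite (eq_filter ef); apply: eq_map => i /=; exact: hlin.
  rewrite -map_comp; apply: perm_map; apply: perm_filter.
  by rewrite perm_sym.
exists Fn, Gn; split; last split; last split.
- apply/vca_stepE; exists (pinvd (evmx (flatten Fsh) Xh)).
  have hPh := pinvd_ok (gram_diag hpLh).
  split; first exact: hPh.
  rewrite (Cof_proj hPh hpLh) -/Ch.
  exists Vh, lamh; split; last split; last split => //.
    rewrite hG hN hD /Vh; do 3 rewrite -?scalemxAl -?scalemxAr.
    rewrite !scalerA !cjM e1.
    by congr (_ *: _); ring.
  rewrite hN /Vh trZ cjT; do 3 rewrite -?scalemxAl -?scalemxAr.
  rewrite !scalerA !cjM e2 cj1.
  have -> : alpha^-1 * (alpha^-1 * alpha ^+ 2) = 1.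
    by rewrite mulrA -expr2 exprVn mulVf // expf_neq0.
  by rewrite scale1r.
- by rewrite -(perm_size hFn) size_map.
- by exists (map (T alpha 1) (F tau.+1)) => //; exact: all2_mapT.
- by exists (map (T alpha 1) (G tau.+1)) => //; exact: all2_mapT.
Qed.
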